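(* Let $X$ be a diffeological space and $E$ a complex vector bundle over $X$ with a local algebra structure such that for every $x\in X$ the algebra $E|_x$ is simple. Then $E$ is an algebra bundle.
   Context: Algebras are complex, associative, unital, finite-dimensional. A complex vector bundle of rank $k$ over a diffeological space $X$ is a diffeological space $E$ with smooth $\pi:E\to X$ and a complex vector space structure on each fiber, such that for every plot $c:U\to X$ ($U$ open in some $\mathbb{R}^n$) and $u\in U$ there are an open $u\in W\subset U$ and a diffeomorphism $W\times\mathbb{C}^k\to W\times_XE$ covering $\mathrm{id}_W$ and fiberwise linear. An algebra structure on $E$ is a bundle morphism $\mu:E\otimes E\to E$ making each fiber an algebra such that the section of units is smooth. It is local if for every plot $c:U\to X$ and $x\in U$ there are an algebra $A_{c,x}$, an open $x\in V\subset U$ and a diffeomorphism $V\times A_{c,x}\to V\times_XE$ covering $\mathrm{id}_V$ that restricts to algebra isomorphisms on each fiber. $E$ is an algebra bundle if the algebras $A_{c,x}$ can be chosen independently of $c$ and $x$. *)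

(* Defs.v *)
From HB Require Import structures.
From mathcomp Require Import all_boot all_order all_algebra.
From mathcomp Require Import all_classical all_reals all_analysis.
From mathcomp Require Import complex falgebra.
From mathcomp Require Import Rstruct Rstruct_topology.
Import GRing.Theory Num.Theory.

Set Implicit Arguments.
Unset Strict Implicit.
Unset Printing Implicit Defensive.

Local Open Scope ring_scope.
Local Open Scope classical_set_scope.

Notation RR := Rdefinitions.R.
Notation CC := (RR[i]).

Fixpoint Ck (n : nat) (k : nat) (U : set 'rV[RR]_n) (f : 'rV[RR]_n -> RR) : Prop :=
  match k with
  | 0 => forall x, U x -> {for x, continuous (f : 'rV[RR]_n -> RR^o)}
  | k'.+1 => (forall x, U x -> differentiable (f : 'rV[RR]_n -> RR^o) x) /\
             forall v : 'rV[RR]_n, Ck k' U ('D_v (f : 'rV[RR]_n -> RR^o))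
  end.

Definition smoothR (n : nat) (U : set 'rV[RR]_n) (f : 'rV[RR]_n -> RR) : Prop :=
  forall k, Ck k U f.

Definition smooth_map (n m : nat) (U : set 'rV[RR]_n) (f : 'rV[RR]_n -> 'rV[RR]_m) : Prop :=
  forall j : 'I_m, smoothR U (fun x => f x ord0 j).

Record diffeology (X : Type) := Diffeology {
  plot : forall n : nat, set 'rV[RR]_n -> ('rV[RR]_n -> X) -> Prop;
  plot_open : forall n (U : set 'rV[RR]_n) c, plot U c -> open U;
  plot_ext : forall n (U : set 'rV[RR]_n) (c c' : 'rV[RR]_n -> X),
      (forall u, U u -> c u = c' u) -> plot U c -> plot U c';
  plot_const : forall n (U : set 'rV[RR]_n) (x : X), open U -> plot U (fun _ => x);
  plot_local : forall n (U : set 'rV[RR]_n) (c : 'rV[RR]_n -> X), open U ->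
      (forall u, U u -> exists W : set 'rV[RR]_n, [/\ open W, W u, W `<=` U & plot W c]) ->
      plot U c;
  plot_comp : forall n m (U : set 'rV[RR]_n) (V : set 'rV[RR]_m)
      (c : 'rV[RR]_n -> X) (f : 'rV[RR]_m -> 'rV[RR]_n),
      plot U c -> open V -> smooth_map V f -> (forall v, V v -> U (f v)) ->
      plot V (c \o f)
}.
Arguments plot {X} d {n}.

Definition dsmooth (X Y : Type) (DX : diffeology X) (DY : diffeology Y) (f : X -> Y) : Prop :=
  forall n (U : set 'rV[RR]_n) (c : 'rV[RR]_n -> X), plot DX U c -> plot DY U (f \o c).

Definition csmooth (n : nat) (U : set 'rV[RR]_n) (g : 'rV[RR]_n -> CC) : Prop :=
  smoothR U (fun u => complex.Re (g u)) /\ smoothR U (fun u => complex.Im (g u)).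

(* plots of C^k = R^{2k} *)
Definition plotCk (k : nat) (n : nat) (U : set 'rV[RR]_n) (q : 'rV[RR]_n -> 'rV[CC]_k) : Prop :=
  open U /\ forall j : 'I_k, csmooth U (fun u => q u ord0 j).

(* plots of a finite-dimensional complex algebra A (standard diffeology of a
   finite-dimensional vector space: coordinates in a basis are smooth) *)
Definition plotA (A : falgType CC) (n : nat) (U : set 'rV[RR]_n) (q : 'rV[RR]_n -> A) : Prop :=
  open U /\ forall i, csmooth U (fun u => coord (vbasis (fullv : {vspace A})) i (q u)).

(* The total space E is represented as the dependent sum {x : X & Efib x}, with
   projection projT1.  [triv_over DE plotF good c W Phi] says that
   (w, v) |-> Phi w v is a diffeomorphism  W x F -> W x_X E  covering id_W
   (for the plot c of X) whose fiber maps satisfy [good]. *)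
Definition triv_over (X : Type) (Efib : X -> Type) (DE : diffeology {x : X & Efib x})
  (F : Type) (plotF : forall m, set 'rV[RR]_m -> ('rV[RR]_m -> F) -> Prop)
  (good : forall x, (F -> Efib x) -> Prop)
  (n : nat) (c : 'rV[RR]_n -> X) (W : set 'rV[RR]_n) (Phi : forall w, F -> Efib (c w)) : Prop :=
  [/\ forall w, W w -> good (c w) (Phi w),
      (* Phi : W x F -> W x_X E is smooth *)
      forall m (U : set 'rV[RR]_m) (p : 'rV[RR]_m -> 'rV[RR]_n) (q : 'rV[RR]_m -> F),
        open U -> smooth_map U p -> (forall u, U u -> W (p u)) -> plotF m U q ->
        plot DE U (fun u => existT Efib (c (p u)) (Phi (p u) (q u)))
    & (* its inverse W x_X E -> W x F is smooth *)
      forall m (U : set 'rV[RR]_m) (p : 'rV[RR]_m -> 'rV[RR]_n) (b : 'rV[RR]_m -> {x : X & Efib x}),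
        open U -> smooth_map U p -> (forall u, U u -> W (p u)) -> plot DE U b ->
        (forall u, U u -> c (p u) = projT1 (b u)) ->
        exists q : 'rV[RR]_m -> F, plotF m U q /\
          forall u, U u -> existT Efib (c (p u)) (Phi (p u) (q u)) = b u ].
Arguments triv_over {X Efib} DE {F} plotF good {n} c W Phi.

Definition vector_bundle (X : Type) (DX : diffeology X) (Efib : X -> lmodType CC)
  (DE : diffeology {x : X & Efib x}) (k : nat) : Prop :=
  dsmooth DE DX (@projT1 X Efib) /\
  forall n (U : set 'rV[RR]_n) (c : 'rV[RR]_n -> X), plot DX U c ->
  forall u, U u ->
  exists (W : set 'rV[RR]_n) (Phi : forall w, 'rV[CC]_k -> Efib (c w)),
    [/\ open W, W u, W `<=` U &
        triv_over DE (@plotCk k) (fun x (f : 'rV[CC]_k -> Efib x) => linear f /\ bijective f)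
                  c W Phi].

(* algebra structure: the fibers are algebras (with the given linear structure),
   multiplication E x_X E -> E is smooth and the unit section is smooth *)
Definition algebra_structure (X : Type) (DX : diffeology X) (Efib : X -> algType CC)
  (DE : diffeology {x : X & Efib x}) : Prop :=
  (forall n (U : set 'rV[RR]_n) (a : 'rV[RR]_n -> X) (e1 e2 : forall u, Efib (a u)),
      plot DE U (fun u => existT Efib (a u) (e1 u)) ->
      plot DE U (fun u => existT Efib (a u) (e2 u)) ->
      plot DE U (fun u => existT Efib (a u) (e1 u * e2 u))) /\
  dsmooth DX DE (fun x => existT Efib x 1).

Definition alg_iso (A : falgType CC) (B : algType CC) (f : A -> B) : Prop :=
  [/\ linear f, bijective f, (forall a b, f (a * b) = f a * f b) & f 1 = 1].

Definition local_algebra_structure (X : Type) (DX : diffeology X) (Efib : X -> algType CC)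
  (DE : diffeology {x : X & Efib x}) : Prop :=
  algebra_structure DX DE /\
  forall n (U : set 'rV[RR]_n) (c : 'rV[RR]_n -> X), plot DX U c ->
  forall x, U x ->
  exists (A : falgType CC) (V : set 'rV[RR]_n) (Phi : forall w, A -> Efib (c w)),
    [/\ open V, V x, V `<=` U &
        triv_over DE (@plotA A) (fun y (f : A -> Efib y) => alg_iso f) c V Phi].

Definition algebra_bundle (X : Type) (DX : diffeology X) (Efib : X -> algType CC)
  (DE : diffeology {x : X & Efib x}) : Prop :=
  algebra_structure DX DE /\
  exists A : falgType CC,
  forall n (U : set 'rV[RR]_n) (c : 'rV[RR]_n -> X), plot DX U c ->
  forall x, U x ->
  exists (V : set 'rV[RR]_n) (Phi : forall w, A -> Efib (c w)),
    [/\ open V, V x, V `<=` U &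
        triv_over DE (@plotA A) (fun y (f : A -> Efib y) => alg_iso f) c V Phi].

Definition two_sided_ideal (B : algType CC) (I : set B) : Prop :=
  [/\ I 0, (forall x y, I x -> I y -> I (x - y)),
      (forall a x, I x -> I (a * x)) & (forall a x, I x -> I (x * a))].

Definition simple_algebra (B : algType CC) : Prop :=
  (1 : B) != 0 /\
  forall I : set B, two_sided_ideal I -> I = [set 0] \/ I = setT.

(* Main.v *)
Require Import Defs.
From HB Require Import structures.
From mathcomp Require Import all_boot all_order all_algebra.
From mathcomp Require Import all_classical all_reals all_analysis.
From mathcomp Require Import complex falgebra.
From mathcomp Require Import Rstruct Rstruct_topology.
From Stdlib Require Import Classical.
Import GRing.Theory Num.Theory.
Local Open Scope ring_scope.
Section Wedd.
Variables (F : closedFieldType) (A : falgType F).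

Definition gideal (I : A -> Prop) : Prop :=
  [/\ I 0, (forall x y, I x -> I y -> I (x - y)),
      (forall a x, I x -> I (a * x)) & (forall a x, I x -> I (x * a))].

Hypothesis simp : forall I, gideal I -> (forall x, I x -> x = 0) \/ (forall x, I x).

Definition lideal (L : {vspace A}) := forall a x, x \in L -> a * x \in L.

Lemma ann_zero L : L != 0%VS -> lideal L ->
  forall a, (forall l, l \in L -> a * l = 0) -> a = 0.
Proof.
move=> L0 lL a ha.
pose I := fun a : A => forall l, l \in L -> a * l = 0.
have gI : gideal I.
  split.
  - by move=> l _; rewrite mul0r.
  - by move=> x y hx hy l lL'; rewrite mulrBl hx // hy // subr0.
  - by move=> b x hx l lL'; rewrite -mulrA hx // mulr0.
  - by move=> b x hx l lL'; rewrite -mulrA hx // lL.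
case: (simp I gI) => [H|H]; first exact: H.
exfalso; move: L0; rewrite -vpick0 => /eqP; apply.
by have := H 1 _ (memv_pick L); rewrite mul1r.
Qed.

Lemma exists_min_lideal : exists L, [/\ lideal L, L != 0%VS &
  forall L', lideal L' -> (L' <= L)%VS -> L' != 0%VS -> L' = L].
Proof.
suff H : forall d L, (\dim L <= d)%N -> lideal L -> L != 0%VS -> exists L0, [/\ lideal L0, L0 != 0%VS &
  forall L', lideal L' -> (L' <= L0)%VS -> L' != 0%VS -> L' = L0].
  apply: (H _ fullv (leqnn _)); first by move=> a x _; rewrite memvf.
  apply/eqP => f0; have := oner_neq0 A; rewrite -memv0 -f0 memvf //.
elim=> [|d IH] L.
  by rewrite leqn0 dimv_eq0 => ->.
move=> dL lL L0.
case: (classic (exists L', [/\ lideal L', (L' <= L)%VS, L' != 0%VS & L' != L])).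
  case=> L' [lL' sL' L'0 nL'].
  apply: (IH L') => //.
  have : (\dim L' < \dim L)%N.
    rewrite ltnNge; apply/negP => hd; apply/negP: nL'.
    by rewrite negbK eqEdim sL' hd.
  by move=> h; rewrite -ltnS; apply: leq_trans h dL.
move=> Hn; exists L; split => // L' lL' sL' L'0.
apply/eqP; apply/negPn/negP => nL'; apply: Hn; exists L'; split => //.
Qed.

Variable L : {vspace A}.
Hypothesis lL : lideal L.
Hypothesis L0 : L != 0%VS.
Hypothesis Lmin : forall L', lideal L' -> (L' <= L)%VS -> L' != 0%VS -> L' = L.

Lemma gen_L z : z \in L -> z != 0 -> forall l, l \in L -> exists a, l = a * z.
Proof.
move=> zL z0 l lL'.
have E : (amulr z @: fullv)%VS = L.
  apply: Lmin.
  - move=> a x /memv_imgP [u _ ->]; rewrite lfunE /= mulrA.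
    by apply/memv_imgP; exists (a * u); rewrite ?memvf // lfunE.
  - apply/subvP => x /memv_imgP [u _ ->]; rewrite lfunE /=; exact: lL.
  - apply/eqP => h; move: z0; have : z \in (amulr z @: fullv)%VS.
      by apply/memv_imgP; exists 1; rewrite ?memvf // lfunE /= mul1r.
    by rewrite h memv0 => ->.
move: lL'; rewrite -E => /memv_imgP [u _ ->]; exists u; by rewrite lfunE.
Qed.

Lemma schur t : t \in L -> exists lam : F, forall z, z \in L -> z * t = lam *: z.
Proof.
move=> tL.
pose m := \dim L.
pose b := vbasis L.
have bL i : b`_i \in L.
  case: (ltnP i m) => hi; first by apply: vbasis_mem; apply: mem_nth; rewrite size_tuple.
  by rewrite nth_default ?mem0v // size_tuple.
have fb : free b by have /andP[_ ] := vbasisP L.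
pose M : 'M[F]_m := \matrix_(i, j) coord b j (b`_i * t).
have [lam] : exists lam, root (char_poly M) lam.
  apply/closed_rootP; rewrite size_char_poly.
  by rewrite eqSS /m dimv_eq0.
rewrite -eigenvalue_root_char => /eigenvalueP [v vM v0].
pose z0 := \sum_(i < m) v 0 i *: b`_i.
have z0L : z0 \in L by apply: memv_suml => i _; apply: memvZ.
have z00 : z0 != 0.
  apply/negP => /eqP h; apply/negP: v0; rewrite negbK; apply/eqP/rowP => i.
  rewrite [RHS]mxE; exact: (freeP fb (fun i => v 0 i) h i).
have z0t : z0 * t = lam *: z0.
  rewrite /z0 mulr_suml scaler_sumr.
  under eq_bigr => i _ do rewrite -scalerAl (coord_vbasis (lL _ _ _)) // .
  transitivity (\sum_(j < m) (v *m M) 0 j *: b`_j); last first.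
    by rewrite vM; apply: eq_bigr => j _; rewrite mxE scalerA.
  under [RHS]eq_bigr => j _ do rewrite mxE scaler_suml.
  rewrite exchange_big /=; apply: eq_bigr => i _; rewrite scaler_sumr.
  by apply: eq_bigr => j _; rewrite mxE scalerA.
exists lam => z zL.
have [a ->] := gen_L z0 z0L z00 z zL.
by rewrite -mulrA z0t scalerAr.
Qed.


Let m := \dim L.
Let b := vbasis L.
Lemma bL i : b`_i \in L.
Proof.
case: (ltnP i m) => hi; first by apply: vbasis_mem; apply: mem_nth; rewrite size_tuple.
by rewrite nth_default ?mem0v // size_tuple.
Qed.
Lemma fb : free b.
Proof. by have /andP[_ ] := vbasisP L. Qed.

Lemma exists_idem : exists e, [/\ e \in L, e != 0 & forall z, z \in L -> z * e = z].
Proof.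
have [a aL a0] : exists2 a, a \in L & a != 0.
  by exists (vpick L); rewrite ?memv_pick ?vpick0.
have [t tL at0] : exists2 t, t \in L & a * t != 0.
  apply: NNPP => H; apply/negP: a0; rewrite negbK; apply/eqP.
  apply: (ann_zero L L0 lL) => l lL'; apply/eqP; apply/negPn/negP => h.
  by apply: H; exists l.
have [lam hl] := schur _ tL.
have lam0 : lam != 0.
  by apply: contraNneq at0 => l0; rewrite hl // l0 scale0r.
exists (lam^-1 *: t); split.
- by rewrite memvZ.
- rewrite scaler_eq0 invr_eq0 (negbTE lam0) /=.
  by apply: contraNneq at0 => ->; rewrite mulr0.
- by move=> z zL; rewrite -scalerAr hl // scalerA mulVf // scale1r.
Qed.

Variable e : A.
Hypotheses (eL : e \in L) (e0 : e != 0) (eid : forall z, z \in L -> z * e = z).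

Lemma eye y : exists lam : F, e * y * e = lam *: e.
Proof.
have tL : e * y * e \in L by apply: lL.
have [lam hl] := schur _ tL.
exists lam; have := hl e eL; by rewrite !mulrA (eid e eL).
Qed.

Lemma exists_mu : exists mu : A -> F, forall y, e * y * e = mu y *: e.
Proof.
have [i0 ci0] : exists i0, coord b i0 e != 0.
  apply: NNPP => H; apply/negP: e0; rewrite negbK (coord_vbasis eL).
  apply/eqP; apply: big1 => i _.
  have -> : coord (vbasis L) i e = 0.
    by apply/eqP; apply/negPn/negP => h; apply: H; exists i.
  by rewrite scale0r.
exists (fun y => coord b i0 (e * y * e) / coord b i0 e) => y.
have [lam ->] := eye y.
by rewrite linearZ /= mulfK.
Qed.

Variable mu : A -> F.
Hypothesis hmu : forall y, e * y * e = mu y *: e.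

Lemma scal_inj (c c' : F) : c *: e = c' *: e -> c = c'.
Proof.
move=> h; apply/eqP; rewrite -subr_eq0; apply/eqP.
have : (c - c') *: e = 0 by rewrite scalerBl h subrr.
by move/eqP; rewrite scaler_eq0 (negbTE e0) orbF => /eqP.
Qed.

Lemma muD c x y : mu (c *: x + y) = c * mu x + mu y.
Proof.
apply: scal_inj; rewrite -hmu mulrDr mulrDl -scalerAr -scalerAl !hmu.
by rewrite scalerDl scalerA.
Qed.

Lemma mu_sum (I : Type) (r : seq I) (f : I -> F) (g : I -> A) :
  mu (\sum_(i <- r) f i *: g i) = \sum_(i <- r) f i * mu (g i).
Proof.
elim: r => [|x r IH]; rewrite ?big_nil ?big_cons.
  by apply: scal_inj; rewrite -hmu scale0r mulr0 mul0r.
by rewrite muD IH.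
Qed.

Lemma sep z : z \in L -> z != 0 -> exists y, mu (y * z) != 0.
Proof.
move=> zL z0; apply: NNPP => H.
have H' y : mu (y * z) = 0.
  by apply/eqP; apply/negPn/negP => h; apply: H; exists y.
pose I := fun x : A => forall y, e * y * x = 0.
have gI : gideal I.
  split.
  - by move=> y; rewrite mulr0.
  - by move=> x x' hx hx' y; rewrite mulrBr hx hx' subrr.
  - by move=> a x hx y; rewrite mulrA -(mulrA e) hx.
  - by move=> a x hx y; rewrite mulrA hx mul0r.
have Iz : I z.
  by move=> y; rewrite -(eid z zL) mulrA -(mulrA e) hmu H' scale0r.
case: (simp I gI) => [h|h].
  by move: z0; rewrite (h z Iz) eqxx.
by move: e0; have := h 1 1; rewrite !mulr1 => ->; rewrite eqxx.
Qed.

Definition sig (a : A) : 'M[F]_m := \matrix_(i, j) coord b i (a * b`_j).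

Lemma sigD c x y : sig (c *: x + y) = c *: sig x + sig y.
Proof.
apply/matrixP => i j; rewrite !mxE mulrDl -scalerAl linearP /=.
by rewrite ?mxE.
Qed.

Lemma sig_add x y : sig (x + y) = sig x + sig y.
Proof. by have := sigD 1 x y; rewrite !scale1r. Qed.

Lemma sig0 : sig 0 = 0.
Proof. by apply/matrixP => i j; rewrite !mxE mul0r linear0. Qed.

Lemma sigZ c x : sig (c *: x) = c *: sig x.
Proof. by rewrite -[c *: x]addr0 sigD sig0 addr0. Qed.

Lemma sigM x y : sig (x * y) = sig x *m sig y.
Proof.
apply/matrixP => i j; rewrite !mxE.
rewrite -mulrA [y * _](coord_vbasis (lL y _ (bL j))) mulr_sumr linear_sum /=.
apply: eq_bigr => k _; rewrite -scalerAr linearZ /= !mxE mulrC //.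
Qed.

Lemma sig1 : sig 1 = 1%:M.
Proof.
by apply/matrixP => i j; rewrite !mxE mul1r coord_free ?fb // eq_sym.
Qed.

Lemma sig_inj x : sig x = 0 -> x = 0.
Proof.
move=> h; apply: (ann_zero L L0 lL) => l lL'.
rewrite (coord_vbasis lL') mulr_sumr; apply: big1 => j _.
rewrite -scalerAr (coord_vbasis (lL x _ (bL j))).
have -> : \sum_(i < \dim L) coord (vbasis L) i (x * (vbasis L)`_j) *: (vbasis L)`_i = 0.
  apply: big1 => i _.
  have := congr1 (fun M : 'M[F]_m => M i j) h; rewrite !mxE => ->.
  by rewrite scale0r.
by rewrite scaler0.
Qed.


Let d := \dim (fullv : {vspace A}).
Let B := vbasis (fullv : {vspace A}).

Lemma dual_exists (w : 'rV[F]_m) : exists y, forall k : 'I_m, mu (y * b`_k) = w 0 k.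
Proof.
pose N : 'M[F]_(d, m) := \matrix_(r, k) mu (B`_r * b`_k).
have fullN : row_full N.
  apply: NNPP => /negP hN.
  have : kermx N^T != 0 by rewrite kermx_eq0 /row_free mxrank_tr.
  case/rowV0Pn => v /sub_kermxP vN v0.
  pose z := \sum_(k < m) v 0 k *: b`_k.
  have zL : z \in L by apply: memv_suml => i _; apply: memvZ; apply: bL.
  have z0 : z != 0.
    apply/negP => /eqP h; apply/negP: v0; rewrite negbK; apply/eqP/rowP => i.
    rewrite [RHS]mxE; exact: (freeP fb (fun i => v 0 i) h i).
  have [y hy] := sep z zL z0; apply/negP: hy; rewrite negbK; apply/eqP.
  rewrite (coord_vbasis (memvf y)) mulr_suml.
  under eq_bigr => r _ do rewrite -scalerAl.
  rewrite mu_sum; apply: big1 => r _.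
  rewrite /z mulr_sumr.
  under eq_bigr => k _ do rewrite -scalerAr.
  rewrite mu_sum.
  have := congr1 (fun M : 'M[F]_(1, d) => M 0 r) vN; rewrite !mxE => E.
  have S : \sum_(k < m) v 0 k * mu (B`_r * b`_k) = \sum_j v 0 j * N^T j r.
    by apply: eq_bigr => k _; rewrite /N !mxE.
  by rewrite S E mulr0.
have [C hC] := row_fullP fullN.
exists (\sum_(r < d) (w *m C) 0 r *: B`_r) => k.
rewrite mulr_suml; under eq_bigr => r _ do rewrite -scalerAl.
rewrite mu_sum.
have : w = w *m C *m N by rewrite -mulmxA hC mulmx1.
move/(congr1 (fun M : 'M[F]_(1, m) => M 0 k)); rewrite [in RHS]mxE => ->.
by apply: eq_bigr => r _; rewrite /N !mxE.
Qed.

Lemma sig_delta i j : exists x, sig x = delta_mx i j.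
Proof.
have [y hy] := dual_exists (delta_mx 0 j).
exists (b`_i * y); apply/matrixP => i' k; rewrite !mxE.
have -> : b`_i * y * b`_k = b`_i * (e * (y * b`_k) * e).
  by rewrite !mulrA (eid _ (bL i)) -[RHS]mulrA (eid _ (bL k)).
rewrite hmu -scalerAr (eid _ (bL i)) linearZ /= coord_free ?fb // hy mxE.
by rewrite eqxx /= -natrM mulnb andbC eq_sym.
Qed.

Lemma sig_delta' i j : exists x, sig x == delta_mx i j.
Proof. by have [x hx] := sig_delta i j; exists x; apply/eqP. Qed.

Lemma sig_surj M : exists x, sig x = M.
Proof.
exists (\sum_i \sum_j M i j *: xchoose (sig_delta' i j)).
rewrite [RHS]matrix_sum_delta (big_morph sig sig_add sig0).
apply: eq_bigr => i _; rewrite (big_morph sig sig_add sig0).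
by apply: eq_bigr => j _; rewrite sigZ (eqP (xchooseP (sig_delta' i j))).
Qed.

End Wedd.

Theorem wedderburn (F : closedFieldType) (A : falgType F) :
  (forall I, @gideal F A I -> (forall x, I x -> x = 0) \/ (forall x : A, I x)) ->
  exists m, exists sg : A -> 'M[F]_m,
   [/\ (forall c x y, sg (c *: x + y) = c *: sg x + sg y),
       (forall x y, sg (x * y) = sg x *m sg y), sg 1 = 1%:M,
       (forall x, sg x = 0 -> x = 0) & (forall M, exists x, sg x = M)].
Proof.
move=> simp.
have [L [lL L0 Lmin]] := exists_min_lideal F A.
have [e [eL e0 eid]] := exists_idem F A simp L lL L0 Lmin.
have [mu hmu] := exists_mu F A L lL L0 Lmin e eL e0 eid.
exists (\dim L), (sig F A L); split.
- exact: sigD.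
- exact: sigM F A L lL.
- exact: sig1.
- exact: sig_inj F A simp L lL L0.
- exact: sig_surj F A simp L e e0 eid mu hmu.
Qed.

Lemma dim_lin_bij (K : fieldType) (U V : vectType K) (f : U -> V) :
  (forall c x y, f (c *: x + y) = c *: f x + f y) ->
  (forall x, f x = 0 -> x = 0) -> (forall v, exists u, f u = v) ->
  dim U = dim V.
Proof.
move=> lf inj sur.
have lf' : linear f by move=> c x y; apply: lf.
pose fL : {linear U -> V} := HB.pack f (GRing.isLinear.Build _ _ _ _ f lf').
pose h := linfun fL.
have hE x : h x = f x by rewrite lfunE.
rewrite -!dimvf.
have : (fullv :&: lker h)%VS = 0%VS.
  apply/eqP; rewrite capfv; apply/lker0P => x y; rewrite !hE => hxy.
  apply/eqP; rewrite -subr_eq0; apply/eqP; apply: inj.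
  by rewrite -[x - y]addrC -scaleN1r lf scaleN1r hxy addrC subrr.
move/limg_dim_eq => <-.
congr (\dim _); apply/eqP; rewrite eqEsubv subvf /=.
apply/subvP => v _; have [u <-] := sur v; rewrite -hE; apply: memv_img; exact: memvf.
Qed.

Lemma dim_mx (K : fieldType) m n : dim 'M[K]_(m, n) = (m * n)%N.
Proof. by []. Qed.



Lemma simple_iso (F : closedFieldType) (A1 A2 : falgType F) :
  (forall I, @gideal F A1 I -> (forall x, I x -> x = 0) \/ (forall x : A1, I x)) ->
  (forall I, @gideal F A2 I -> (forall x, I x -> x = 0) \/ (forall x : A2, I x)) ->
  dim A1 = dim A2 ->
  exists psi : A1 -> A2, [/\ (forall c x y, psi (c *: x + y) = c *: psi x + psi y),
     bijective psi, (forall x y, psi (x * y) = psi x * psi y) & psi 1 = 1].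
Proof.
move=> s1 s2 d12.
have [m1 [g1 [l1 M1 o1 i1 su1]]] := wedderburn _ _ s1.
have [m2 [g2 [l2 M2 o2 i2 su2]]] := wedderburn _ _ s2.
have e1 := dim_lin_bij _ _ _ _ l1 i1 su1.
have e2 := dim_lin_bij _ _ _ _ l2 i2 su2.
have em : m1 = m2.
  move: d12; rewrite e1 e2 !dim_mx => h.
  case: (ltngtP m1 m2) => // hm; exfalso.
    by have := ltn_mul hm hm; rewrite h ltnn.
  by have := ltn_mul hm hm; rewrite h ltnn.
subst m2.
have inj (B : falgType F) (g : B -> 'M[F]_m1) :
    (forall c x y, g (c *: x + y) = c *: g x + g y) -> (forall x, g x = 0 -> x = 0) ->
    forall x y, g x = g y -> x = y.
  move=> lg ig x y hxy; apply/eqP; rewrite -subr_eq0; apply/eqP; apply: ig.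
  by rewrite -[x - y]addrC -scaleN1r lg scaleN1r hxy addrC subrr.
have ex2 x : exists y, g2 y == g1 x by have [y hy] := su2 (g1 x); exists y; apply/eqP.
have ex1 x : exists y, g1 y == g2 x by have [y hy] := su1 (g2 x); exists y; apply/eqP.
pose psi x := xchoose (ex2 x).
pose phi x := xchoose (ex1 x).
have hpsi x : g2 (psi x) = g1 x by apply/eqP; exact: (xchooseP (ex2 x)).
have hphi x : g1 (phi x) = g2 x by apply/eqP; exact: (xchooseP (ex1 x)).
exists psi; split.
- by move=> c x y; apply: (inj _ _ l2 i2); rewrite l2 !hpsi l1.
- exists phi => x.
    by apply: (inj _ _ l1 i1); rewrite hphi hpsi.
  by apply: (inj _ _ l2 i2); rewrite hpsi hphi.
- by move=> x y; apply: (inj _ _ l2 i2); rewrite M2 !hpsi M1.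
- by apply: (inj _ _ l2 i2); rewrite hpsi o1 o2.
Qed.
Local Open Scope classical_set_scope.
Set Implicit Arguments.
Unset Strict Implicit.
Section An.
Variables (V W : normedModType RR).

Lemma near0_o (h : V -> W) (x : V) :
  (\forall y \near x, h y = 0) -> h \o shift x = cst (h x) + (\0 : V -> W) +o_ 0 id.
Proof.
move=> hn.
have hx : h x = 0 by apply: (nbhs_singleton hn).
rewrite hx addr0.
apply/eqaddoP => eps eps0.
have hn' : \forall z \near 0, h (z + x) = 0.
  by move: hn; rewrite (near_shift 0) subr0.
move: hn'; apply: filterS => y hy.
have -> : (h \o shift x - cst 0) y = h (y + x) - 0 by [].
rewrite hy.
by rewrite subrr normr0 mulr_ge0 // Order.POrderTheory.ltW.
Qed.

Lemma near0_diff (h : V -> W) (x : V) :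
  (\forall y \near x, h y = 0) -> differentiable h x.
Proof.
move=> hn.
have E := near0_o hn.
have dE : ('d h x : V -> W) = 0.
  apply/diff_unique => //. exact: cst_continuous.
apply/diff_locallyP; rewrite dE; split => //.
exact: cst_continuous.
Qed.
End An.

Lemma open_near n (U : set 'rV[RR]_n) x : open U -> U x -> \forall y \near x, U y.
Proof. by move=> Uo Ux; apply: open_nbhs_nbhs; split. Qed.

Lemma near_eqU n (U : set 'rV[RR]_n) (f g : 'rV[RR]_n -> RR) x :
  open U -> (forall x, U x -> f x = g x) -> U x -> \forall y \near x, f y = g y.
Proof. by move=> Uo fg Ux; apply: (filterS _ (open_near Uo Ux)) => y /fg. Qed.

Lemma Ck_ext n k (U : set 'rV[RR]_n) (f g : 'rV[RR]_n -> RR) :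
  open U -> (forall x, U x -> f x = g x) -> Ck k U f -> Ck k U g.
Proof.
elim: k f g => [|k IH] f g Uo fg /=.
  move=> cf x Ux.
  have nfg := near_eqU Uo fg Ux.
  move: (cf x Ux); rewrite /prop_for /continuous_at (fg x Ux) => cfx.
  apply: cvg_trans cfx.
  exact: near_eq_cvg nfg.
case=> df dD; split.
  move=> x Ux.
  have nz : \forall y \near x, g y - f y = 0.
    by apply: (filterS _ (near_eqU Uo fg Ux)) => y ->; rewrite subrr.
  have -> : (g : 'rV[RR]_n -> RR^o) = f + ((g : 'rV[RR]_n -> RR^o) - f).
    by apply/funext => y /=; rewrite addrC subrK.
  apply: differentiableD; first exact: df.
  exact: (near0_diff (h := (g : 'rV[RR]_n -> RR^o) - f) nz).
move=> v; apply: (IH ('D_v (f : 'rV[RR]_n -> RR^o))) => // x Ux.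
by apply: (@near_eq_derive RR _ RR^o (f : _ -> RR^o) (g : _ -> RR^o)); apply: near_eqU Uo fg Ux.
Qed.

Lemma Ck_add n k (U : set 'rV[RR]_n) (f g : 'rV[RR]_n -> RR) :
  open U -> Ck k U f -> Ck k U g -> Ck k U (fun x => f x + g x).
Proof.
elim: k f g => [|k IH] f g Uo /=.
  move=> cf cg x Ux.
  exact: (@cvgD _ _ _ _ _ (f : _ -> RR^o) (g : _ -> RR^o) _ _ (cf x Ux) (cg x Ux)).
case=> df dDf [dg dDg]; split.
  move=> x Ux.
  exact: (@differentiableD _ _ _ (f : _ -> RR^o) (g : _ -> RR^o) x (df x Ux) (dg x Ux)).
move=> v; apply: (Ck_ext Uo _ (IH _ _ Uo (dDf v) (dDg v))) => x Ux.
rewrite -(@deriveD _ _ _ (f : _ -> RR^o) (g : _ -> RR^o)) //.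
  exact: diff_derivable (df x Ux).
exact: diff_derivable (dg x Ux).
Qed.

Lemma Ck_scale n k (U : set 'rV[RR]_n) (r : RR) (f : 'rV[RR]_n -> RR) :
  open U -> Ck k U f -> Ck k U (fun x => r * f x).
Proof.
elim: k f => [|k IH] f Uo /=.
  move=> cf x Ux.
  have h := (cvgZl_tmp (k := r) (cf x Ux)); exact: h.
case=> df dDf; split.
  move=> x Ux.
  exact: (@differentiableZ _ _ _ (f : _ -> RR^o) r x (df x Ux)).
move=> v; apply: (Ck_ext Uo _ (IH _ Uo (dDf v))) => x Ux.
symmetry.
have h := @deriveZ _ _ _ (f : _ -> RR^o) r x v (diff_derivable (v := v) (df x Ux)).
exact: h.
Qed.

Lemma Ck_cst n k (U : set 'rV[RR]_n) (c : RR) :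
  open U -> Ck k U (fun _ => c).
Proof.
elim: k c => [|k IH] c Uo /=.
  by move=> x Ux; apply: cst_continuous.
split.
  by move=> x Ux; apply: (@differentiable_cst _ _ _ (c : RR^o)).
move=> v; apply: (Ck_ext Uo _ (IH 0 Uo)) => x Ux.
by rewrite (@derive_cst _ _ _ (c : RR^o)).
Qed.

Lemma sm_add n (U : set 'rV[RR]_n) f g : open U -> smoothR U f -> smoothR U g ->
  smoothR U (fun x => f x + g x).
Proof. by move=> Uo sf sg k; apply: Ck_add. Qed.

Lemma sm_scale n (U : set 'rV[RR]_n) r f : open U -> smoothR U f ->
  smoothR U (fun x => r * f x).
Proof. by move=> Uo sf k; apply: Ck_scale. Qed.

Lemma sm_cst n (U : set 'rV[RR]_n) c : open U -> smoothR U (fun _ => c).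
Proof. by move=> Uo k; apply: Ck_cst. Qed.

Lemma sm_ext n (U : set 'rV[RR]_n) f g : open U -> (forall x, U x -> f x = g x) ->
  smoothR U f -> smoothR U g.
Proof. by move=> Uo fg sf k; apply: Ck_ext Uo fg (sf k). Qed.

Lemma ReD (a b : CC) : complex.Re (a + b) = complex.Re a + complex.Re b.
Proof. by case: a => ? ?; case: b. Qed.
Lemma ImD (a b : CC) : complex.Im (a + b) = complex.Im a + complex.Im b.
Proof. by case: a => ? ?; case: b. Qed.
Lemma ReM (a b : CC) : complex.Re (a * b) = complex.Re a * complex.Re b - complex.Im a * complex.Im b.
Proof. by case: a => ? ?; case: b. Qed.
Lemma ImM (a b : CC) : complex.Im (a * b) = complex.Re a * complex.Im b + complex.Im a * complex.Re b.
Proof. by case: a => ? ?; case: b. Qed.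

Lemma cs_add n (U : set 'rV[RR]_n) g h : open U -> csmooth U g -> csmooth U h ->
  csmooth U (fun x => g x + h x).
Proof.
move=> Uo [g1 g2] [h1 h2]; split.
  under [fun _ => _]funext => x do rewrite ReD. exact: sm_add.
under [fun _ => _]funext => x do rewrite ImD. exact: sm_add.
Qed.

Lemma cs_mulc n (U : set 'rV[RR]_n) g (c : CC) : open U -> csmooth U g ->
  csmooth U (fun x => g x * c).
Proof.
move=> Uo [g1 g2]; split.
  under [fun _ => _]funext => x do rewrite ReM (mulrC (complex.Re (g x))) (mulrC (complex.Im (g x))).
  apply: sm_add => //; first exact: sm_scale.
  under [fun _ => _]funext => x do rewrite -mulNr.
  exact: sm_scale.
under [fun _ => _]funext => x do rewrite ImM (mulrC (complex.Re (g x))) (mulrC (complex.Im (g x))).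
by apply: sm_add => //; apply: sm_scale.
Qed.

Lemma cs_cst n (U : set 'rV[RR]_n) (c : CC) : open U -> csmooth U (fun _ => c).
Proof. by move=> Uo; split; apply: sm_cst. Qed.

Lemma cs_sum n (U : set 'rV[RR]_n) (I : Type) (r : seq I) (g : I -> 'rV[RR]_n -> CC) :
  open U -> (forall i, csmooth U (g i)) -> csmooth U (fun x => \sum_(i <- r) g i x).
Proof.
move=> Uo hg; elim: r => [|i r IH].
  under [fun _ => _]funext => x do rewrite big_nil. exact: cs_cst.
under [fun _ => _]funext => x do rewrite big_cons. exact: cs_add.
Qed.

Lemma plotA_lin (A1 A2 : falgType CC) (psi : A1 -> A2) n (U : set 'rV[RR]_n) q :
  (forall c x y, psi (c *: x + y) = c *: psi x + psi y) ->
  @plotA A1 n U q -> @plotA A2 n U (fun u => psi (q u)).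
Proof.
move=> lp [Uo cq]; split => // j.
have lp' : linear psi by move=> c x y; apply: lp.
pose pL : {linear A1 -> A2} := HB.pack psi (GRing.isLinear.Build _ _ _ _ psi lp').
have -> : (fun u => coord (vbasis (fullv : {vspace A2})) j (psi (q u))) =
   (fun u => \sum_(i < \dim (fullv : {vspace A1})) coord (vbasis (fullv : {vspace A1})) i (q u) *
       coord (vbasis (fullv : {vspace A2})) j (psi (vbasis (fullv : {vspace A1}))`_i)).
  apply/funext => u.
  have -> : psi (q u) = pL (q u) by [].
  rewrite {1}(coord_vbasis (memvf (q u))) linear_sum linear_sum /=.
  apply: eq_bigr => i _.
  have -> : psi (coord (vbasis fullv) i (q u) *: (vbasis fullv)`_i) =
     pL (coord (vbasis fullv) i (q u) *: (vbasis fullv)`_i) by [].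
  by rewrite linearZ /= linearZ.
apply: cs_sum => // i.
exact: cs_mulc.
Qed.

Lemma lin_inv (K : fieldType) (U V : lmodType K) (f : U -> V) (g : V -> U) :
  (forall c x y, f (c *: x + y) = c *: f x + f y) -> cancel f g -> cancel g f ->
  forall c x y, g (c *: x + y) = c *: g x + g y.
Proof. by move=> lf fg gf c x y; apply: (can_inj fg); rewrite lf !gf. Qed.

Lemma lin0 (K : fieldType) (U V : lmodType K) (f : U -> V) :
  (forall c x y, f (c *: x + y) = c *: f x + f y) -> f 0 = 0.
Proof.
move=> lf; have h := lf 1 0 0; rewrite !scale1r addr0 in h.
by apply: (addrI (f 0)); rewrite addr0 -h.
Qed.

Lemma dim_lin_bij' (K : fieldType) (U V : vectType K) (f : U -> V) :
  (forall c x y, f (c *: x + y) = c *: f x + f y) -> bijective f -> dim U = dim V.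
Proof.
move=> lf [g fg gf]; apply: (dim_lin_bij _ _ _ _ lf).
  by move=> x fx0; rewrite -[x]fg fx0 -(lin0 lf) fg.
by move=> v; exists (g v).
Qed.

Definition simpA (A : falgType CC) :=
  forall I, @gideal CC A I -> (forall x, I x -> x = 0) \/ (forall x, I x).

Lemma simple_transfer (A : falgType CC) (B : algType CC) (f : A -> B) :
  alg_iso f -> simple_algebra B -> simpA A.
Proof.
case=> lf [g fg gf] fM f1 [_ sB] I [I0 IB IL IR].
have lf' c x y : f (c *: x + y) = c *: f x + f y by apply: lf.
have f0 := lin0 lf'.
have fB x y : f (x - y) = f x - f y.
  by rewrite -scaleN1r addrC lf' scaleN1r addrC.
pose J := fun y : B => exists a, I a /\ y = f a.
have gJ : two_sided_ideal J.
  split.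
  - by exists 0; split => //; rewrite f0.
  - by move=> x y [a [Ia ->]] [b [Ib ->]]; exists (a - b); split; [exact: IB | rewrite fB].
  - by move=> c x [a [Ia ->]]; exists (g c * a); split; [exact: IL | rewrite fM gf].
  - by move=> c x [a [Ia ->]]; exists (a * g c); split; [exact: IR | rewrite fM gf].
case: (sB J gJ) => hJ; [left | right].
  move=> x Ix.
  have : J (f x) by exists x.
  rewrite hJ /= => fx0.
  by rewrite -[x]fg fx0 -f0 fg.
move=> x.
have : J (f x) by rewrite hJ.
by case=> a [Ia /(can_inj fg) ->].
Qed.

Theorem lemmaA6 (X : Type) (DX : diffeology X) (Efib : X -> algType CC)
  (DE : diffeology {x : X & Efib x}) (k : nat)
  (Hvb : @vector_bundle X DX (fun x => (Efib x : lmodType CC)) DE k)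
  (Hloc : local_algebra_structure DX DE)
  (Hsimple : forall x : X, simple_algebra (Efib x)) :
  algebra_bundle DX DE.
Proof.
have [Halg Hl] := Hloc.
split => //.
have [_ Hv] := Hvb.
have key : forall n (U : set 'rV[RR]_n) (c : 'rV[RR]_n -> X) (A : falgType CC)
    (V : set 'rV[RR]_n) (Phi : forall w, A -> Efib (c w)) x,
    plot DX U c -> U x -> V x ->
    triv_over DE (@plotA A) (fun y (f : A -> Efib y) => alg_iso f) c V Phi ->
    simpA A /\ dim A = k.
  move=> n U c A V Phi x pc Ux Vx [good _ _].
  have iso := good x Vx.
  split; first exact: simple_transfer iso (Hsimple (c x)).
  have [W [Psi [_ Wx _ [goodW _ _]]]] := Hv n U c pc x Ux.
  have [lPsi bPsi] := goodW x Wx.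
  case: iso => lPhi [g fg gf] _ _.
  have lPhi' c' x' y' : Phi x (c' *: x' + y') = c' *: Phi x x' + Phi x y' by apply: lPhi.
  have lg := lin_inv lPhi' fg gf.
  have lPsi' c' x' y' : Psi x (c' *: x' + y') = c' *: Psi x x' + Psi x y' by apply: lPsi.
  have := @dim_lin_bij' CC 'rV[CC]_k A (fun v => g (Psi x v)).
  rewrite dim_mx mul1n => -> //.
    by move=> c' x' y'; rewrite lPsi' lg.
  apply: bij_comp => //; exact: (Bijective gf fg).
case: (classic (exists x0 : X, True)) => [[x0 _]|nX]; last first.
  exists ('M[CC]_1) => n U c pc x Ux; exfalso; apply: nX; exists (c x); done.
pose c0 := fun _ : 'rV[RR]_0 => x0.
have pc0 : plot DX setT c0 := @plot_const _ DX 0 setT x0 openT.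
have [A0 [V0 [Phi0 [_ V0x _ tr0]]]] := Hl 0 setT c0 pc0 0 I.
have [s0 d0] := key _ _ _ _ _ _ _ pc0 I V0x tr0.
exists A0 => n U c pc x Ux.
have [A [V [Phi [Vo Vx VU tr]]]] := Hl n U c pc x Ux.
have [s d] := key _ _ _ _ _ _ _ pc Ux Vx tr.
have [psi [lpsi [ginv pg gp] Mpsi opsi]] := simple_iso _ _ _ s0 s (etrans d0 (esym d)).
exists V, (fun w a => Phi w (psi a)); split => //.
case: tr => good sm inv; split.
- move=> w Vw; case: (good w Vw) => lP bP MP oP; split.
  + by move=> a u v /=; rewrite lpsi lP.
  + exact: bij_comp bP (Bijective pg gp).
  + by move=> a b /=; rewrite Mpsi MP.
  + by rewrite /= opsi oP.
- move=> m U' p q U'o sp pV pq.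
  exact: (sm m U' p (fun u => psi (q u)) U'o sp pV (plotA_lin lpsi pq)).
- move=> m U' p b U'o sp pV pb hc.
  have [q [pq hq]] := inv m U' p b U'o sp pV pb hc.
  exists (fun u => ginv (q u)); split.
    exact: (plotA_lin (lin_inv lpsi pg gp) pq).
  by move=> u Uu /=; rewrite gp; exact: hq u Uu.
Qed.
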